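(* Let $G$ be a graph whose $\operatorname{IR}$-graph $H=G(\operatorname{IR})$ is connected. Let $X=\{x_1,\dots,x_r\}$ be an $\operatorname{IR}(G)$-set such that exactly three vertices $x_1,x_2,x_3$ have positive degree in $G[X]$. For $i=1,2,3$ let $x_i'\in\operatorname{EPN}(x_i,X)$, and let $X'=(X-\{x_1,x_2,x_3\})\cup\{x_1',x_2',x_3'\}$. If $d_H(X,X')=3$, then $H$ contains an induced $4$-cycle, or $H$ contains an induced subgraph isomorphic to the double star $S(2,2)$ in which $X$ and $X'$ are leaves at distance $3$ from each other (antipodal leaves).
   Context: All graphs are finite and simple. For $G=(V,E)$, $D\subseteq V$, $v\in D$: $\operatorname{PN}(v,D)=N[v]-N[D-\{v\}]$ and $\operatorname{EPN}(v,D)=\operatorname{PN}(v,D)-D$. $D$ is irredundant if $\operatorname{PN}(v,D)\neq\varnothing$ for all $v\in D$; $\operatorname{IR}(G)$ is the maximum size of an irredundant set; an $\operatorname{IR}(G)$-set is an irredundant set of that size. $G(\operatorname{IR})$ has the $\operatorname{IR}(G)$-sets as vertices, with $D\sim D'$ iff there exist $u\in D$, $v\in D'$ with $uv\in E(G)$ and $D'=(D-\{u\})\cup\{v\}$. $d_H$ is distance in $H$. The double star $S(2,2)$ is the tree obtained by joining the centres of two copies of $K_{1,2}$ by an edge (6 vertices, diameter 3). *)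

(* Defs.v *)
(* A simple graph G is a symmetric irreflexive relation e on a finType T. *)
From mathcomp Require Import all_boot.
Set Implicit Arguments. Unset Strict Implicit. Unset Printing Implicit Defensive.

Section IRGraph.
Variables (T : finType) (e : rel T).

Definition cnbhd (v : T) : {set T} := [set u | (u == v) || e v u].
Definition cnbhdS (D : {set T}) : {set T} := \bigcup_(w in D) cnbhd w.

Definition PN (v : T) (D : {set T}) : {set T} := cnbhd v :\: cnbhdS (D :\ v).
Definition EPN (v : T) (D : {set T}) : {set T} := PN v D :\: D.

Definition irredundant (D : {set T}) : bool := [forall v in D, PN v D != set0].

(* IR(G): maximum size of an irredundant set (set0 is irredundant) *)
Definition IR : nat := \max_(D : {set T} | irredundant D) #|D|.

Definition IRset (D : {set T}) : bool := irredundant D && (#|D| == IR).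

Definition IRadj (D D' : {set T}) : bool :=
  [&& IRset D, IRset D' &
   [exists u in D, exists v in D', e u v && (D' == (D :\ u) :|: [set v])]].

Definition IRconnected : Prop :=
  forall D D', IRset D -> IRset D' -> connect IRadj D D'.

Definition IRdist_le (D D' : {set T}) (n : nat) : Prop :=
  IRset D /\
  exists p : seq {set T}, size p <= n /\ path IRadj D p /\ last D p = D'.

Definition IRdist (D D' : {set T}) (n : nat) : Prop :=
  IRdist_le D D' n /\ forall m, m < n -> ~ IRdist_le D D' m.

Definition posdeg_in (X : {set T}) (x : T) : bool := [exists y in X, e x y].

Definition has_induced_C4 : Prop :=
  exists A B C D : {set T},
    uniq [:: A; B; C; D] /\
    IRadj A B /\ IRadj B C /\ IRadj C D /\ IRadj D A /\
    ~~ IRadj A C /\ ~~ IRadj B D.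

Definition has_induced_S22_antipodal (X X' : {set T}) : Prop :=
  exists a c1 c2 b : {set T},
    uniq [:: X; a; c1; c2; X'; b] /\
    IRadj X c1 /\ IRadj a c1 /\ IRadj c1 c2 /\ IRadj c2 X' /\ IRadj c2 b /\
    ~~ IRadj X a /\ ~~ IRadj X c2 /\ ~~ IRadj X X' /\ ~~ IRadj X b /\
    ~~ IRadj a c2 /\ ~~ IRadj a X' /\ ~~ IRadj a b /\
    ~~ IRadj c1 X' /\ ~~ IRadj c1 b /\ ~~ IRadj X' b.

End IRGraph.

(* Main.v *)
Require Import Defs.
From mathcomp Require Import all_boot.
Set Implicit Arguments. Unset Strict Implicit. Unset Printing Implicit Defensive.


Section Aux.
Variables (T : finType) (e : rel T).
Hypothesis e_sym : symmetric e.
Hypothesis e_irr : irreflexive e.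

Definition good (Y : {set T}) v := v \notin cnbhdS e Y.

Lemma in_cnbhd v u : (u \in cnbhd e v) = (u == v) || e v u.
Proof. by rewrite inE. Qed.

Lemma in_cnbhdS (S : {set T}) u : reflect (exists2 w, w \in S & u \in cnbhd e w) (u \in cnbhdS e S).
Proof. exact: bigcupP. Qed.

Lemma good_notin (Y : {set T}) v : good Y v -> v \notin Y.
Proof.
move=> g; apply/negP=> vY; move/negP: g; apply; apply/in_cnbhdS; exists v => //.
by rewrite in_cnbhd eqxx.
Qed.

Lemma good_nadj (Y : {set T}) v y : good Y v -> y \in Y -> ~~ e y v.
Proof.
move=> g yY; apply/negP=> E; move/negP: g; apply; apply/in_cnbhdS; exists y => //.
by rewrite in_cnbhd E orbT.
Qed.

Lemma good_neq (Y : {set T}) v y : good Y v -> y \in Y -> v != y.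
Proof.
move=> g yY; apply/negP=> /eqP E; move/negP: g; apply; apply/in_cnbhdS; exists y => //.
by rewrite in_cnbhd E eqxx.
Qed.

Lemma pn_mem (D : {set T}) v w : w \in cnbhd e v ->
  (forall z, z \in D -> z != v -> w \notin cnbhd e z) -> PN e v D != set0.
Proof.
move=> wv H; apply/set0Pn; exists w; rewrite /PN in_setD wv andbT.
apply/negP => /in_cnbhdS [z]; rewrite !inE => /andP [zv zD].
by move=> wz; have := H z zD zv; rewrite in_cnbhd wz.
Qed.

Lemma irr3 (Y : {set T}) (p q r wp wq wr : T) :
  (forall y z, y \in Y -> z \in Y -> ~~ e y z) ->
  good Y p -> good Y q -> good Y r -> good Y wp -> good Y wq -> good Y wr ->
  p != q -> p != r -> q != r ->
  (wp == p) || e p wp -> wp != q -> ~~ e q wp -> wp != r -> ~~ e r wp ->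
  (wq == q) || e q wq -> wq != p -> ~~ e p wq -> wq != r -> ~~ e r wq ->
  (wr == r) || e r wr -> wr != p -> ~~ e p wr -> wr != q -> ~~ e q wr ->
  irredundant e (Y :|: [set p; q; r]).
Proof.
move=> indY gp gq gr gwp gwq gwr pq pr qr.
move=> wpp wpq ewpq wpr ewpr wqq wqp ewqp wqr ewqr wrr wrp ewrp wrq ewrq.
have gY w z : good Y w -> z \in Y -> ~~ ((w == z) || e z w).
  by move=> g zY; rewrite negb_or (good_neq g zY) (good_nadj g zY).
have ncl w z : w != z -> ~~ e z w -> ~~ ((w == z) || e z w).
  by move=> h1 h2; rewrite negb_or h1.
apply/forallP => v; apply/implyP; rewrite !inE => vD.
case/orP: vD => [vY|].
  apply: (pn_mem (w := v)); first by rewrite in_cnbhd eqxx.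
  move=> z; rewrite !inE => zD zv; rewrite negb_or eq_sym zv /=.
  case/orP: zD => [zY|zD]; first by apply: indY.
  have gz : good Y z by move: zD; case/orP=> [/orP [] | ] /eqP ->.
  by rewrite e_sym (good_nadj gz vY).
case/orP => [/orP [] | ] /eqP ->.
- apply: (pn_mem (w := wp)); first by rewrite in_cnbhd.
  move=> z zD zp; rewrite in_cnbhd; move: zD zp; rewrite !inE => /orP [zY _|]; first exact: gY gwp zY.
  by case/orP=> [/orP [] | ] /eqP -> //; rewrite ?eqxx // => _; apply: ncl.
- apply: (pn_mem (w := wq)); first by rewrite in_cnbhd.
  move=> z zD zp; rewrite in_cnbhd; move: zD zp; rewrite !inE => /orP [zY _|]; first exact: gY gwq zY.
  by case/orP=> [/orP [] | ] /eqP -> //; rewrite ?eqxx // => _; apply: ncl.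
- apply: (pn_mem (w := wr)); first by rewrite in_cnbhd.
  move=> z zD zp; rewrite in_cnbhd; move: zD zp; rewrite !inE => /orP [zY _|]; first exact: gY gwr zY.
  by case/orP=> [/orP [] | ] /eqP -> //; rewrite ?eqxx // => _; apply: ncl.
Qed.

Lemma card3 (Y : {set T}) (p q r : T) : p \notin Y -> q \notin Y -> r \notin Y ->
  p != q -> p != r -> q != r -> #|Y :|: [set p; q; r]| = #|Y| + 3.
Proof.
move=> pY qY rY pq pr qr.
have -> : Y :|: [set p; q; r] = p |: (q |: (r |: Y)).
  apply/setP=> z; rewrite !inE.
  by case: (z \in Y); case: (z == p); case: (z == q); case: (z == r).
rewrite cardsU1 cardsU1 cardsU1 !inE (negbTE pY) (negbTE qY) (negbTE rY).
by rewrite (negbTE pq) (negbTE pr) (negbTE qr) /= !add1n addn3.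
Qed.

Lemma IRset3 (Y : {set T}) (p q r : T) : IR e = #|Y| + 3 ->
  p \notin Y -> q \notin Y -> r \notin Y -> p != q -> p != r -> q != r ->
  irredundant e (Y :|: [set p; q; r]) -> IRset e (Y :|: [set p; q; r]).
Proof.
by move=> HIR pY qY rY pq pr qr Hi; rewrite /IRset Hi card3 // HIR eqxx.
Qed.

Lemma adjG (Y D D' : {set T}) (p q r s : T) : IRset e D -> IRset e D' ->
  D = Y :|: [set p; q; r] -> D' = Y :|: [set s; q; r] ->
  p \notin Y -> p != q -> p != r -> e p s -> IRadj e D D'.
Proof.
move=> HD HD' ED ED' pY pq pr ps; rewrite /IRadj HD HD' /=.
apply/existsP; exists p; rewrite ED !inE eqxx orbT /=.
apply/existsP; exists s; rewrite ED' !inE eqxx orbT ps /=.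
apply/eqP/setP=> z; rewrite !inE.
case: (eqVneq z p) => [->|zp] /=.
  by rewrite (negbTE pY) (negbTE pq) (negbTE pr) !orbF.
by case: (z \in Y); case: (z == s); case: (z == q); case: (z == r).
Qed.

Lemma nonadj2 (A B : {set T}) x z : x \in A -> x \notin B -> z \in A -> z \notin B -> x != z ->
  ~~ IRadj e A B.
Proof.
move=> xA xB zA zB xz; apply/negP; case/and3P => _ _ /existsP [u /andP [uA]].
case/existsP => v /andP [_ /andP [_ /eqP EB]].
move: xz xB zB; rewrite EB !inE xA zA !andbT !negb_or => xz /andP [/negPn /eqP E1 _].
by case/andP => /negPn /eqP E2 _; rewrite E1 E2 eqxx in xz.
Qed.

Lemma nonadj1G (Y D D' : {set T}) (p q r s : T) : D = Y :|: [set p; q; r] -> D' = Y :|: [set s; q; r] ->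
  p \notin Y -> s \notin Y -> p != q -> p != r -> s != p -> s != q -> s != r ->
  ~~ e p s -> ~~ IRadj e D D'.
Proof.
move=> ED ED' pY sY pq pr sp sq sr nps; apply/negP; case/and3P => _ _ /existsP [u /andP [uA]].
case/existsP => v /andP [vD' /andP [euv /eqP EB]].
have sv : s = v.
  have : s \in D' by rewrite ED' !inE eqxx orbT.
  rewrite EB !inE => /orP [/andP [_ sD]|/eqP //].
  by move: sD; rewrite ED !inE (negbTE sY) (negbTE sp) (negbTE sq) (negbTE sr).
have pu : p = u.
  have : p \notin D'.
    by rewrite ED' !inE (negbTE pY) eq_sym (negbTE sp) (negbTE pq) (negbTE pr).
  rewrite EB !inE ED !inE eqxx orbT andbT negb_or => /andP [/negPn /eqP -> _] //.
by move: nps; rewrite pu sv euv.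
Qed.

Lemma neqS (A B : {set T}) x : x \in A -> x \notin B -> A != B.
Proof. by move=> xA xB; apply/negP => /eqP E; rewrite -E xA in xB. Qed.

Lemma notin3 (Y : {set T}) (x p q r : T) : x \notin Y -> x != p -> x != q -> x != r -> x \notin Y :|: [set p; q; r].
Proof. by move=> h1 h2 h3 h4; rewrite !inE !negb_or h1 h2 h3 h4. Qed.

Lemma pn3 (Y : {set T}) (p q r : T) : irredundant e (Y :|: [set p; q; r]) -> p \notin Y -> p != q -> p != r ->
  exists w, [/\ (w == p) || e p w, w != q, ~~ e q w, (w != r) && ~~ e r w & good Y w].
Proof.
move=> Hi pY pq pr.
have : PN e p (Y :|: [set p; q; r]) != set0.
  by move/forallP: Hi => /(_ p); rewrite !inE eqxx orbT.
case/set0Pn => w; rewrite /PN in_setD => /andP [nw wp].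
have nz z : z \in Y :|: [set p; q; r] -> z != p -> w \notin cnbhd e z.
  move=> zD zp; apply/negP => wz.
  have : w \in cnbhdS e ((Y :|: [set p; q; r]) :\ p).
    by apply/in_cnbhdS; exists z => //; rewrite in_setD1 zp.
  by rewrite (negbTE nw).
have := nz q; rewrite !inE eqxx !orbT (eq_sym q p) pq => /(_ isT isT); rewrite negb_or => /andP [wq ewq].
have := nz r; rewrite !inE eqxx !orbT (eq_sym r p) pr => /(_ isT isT); rewrite negb_or => /andP [wr ewr].
exists w; split => //; first by rewrite -in_cnbhd.
  by rewrite wr ewr.

rewrite /good; apply/negP => /in_cnbhdS [y yY wy].
have yp : y != p by apply/negP => /eqP E; rewrite -E yY in pY.
by have := nz y; rewrite in_setU yY wy yp => /(_ isT isT).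
Qed.

End Aux.


Section Core.
Variables (T : finType) (e : rel T).
Hypothesis e_sym : symmetric e.
Hypothesis e_irr : irreflexive e.

Lemma C4I (A B C D : {set T}) :
  IRadj e A B -> IRadj e B C -> IRadj e C D -> IRadj e D A ->
  ~~ IRadj e A C -> ~~ IRadj e B D ->
  A != B -> A != C -> A != D -> B != C -> B != D -> C != D -> has_induced_C4 e.
Proof.
move=> *; exists A, B, C, D; split; last by repeat split.
by rewrite /= !inE !negb_or; apply/and4P; split => //; apply/andP; split => //; apply/andP.
Qed.

Lemma S22I (X X' a c1 c2 b : {set T}) :
  IRadj e X c1 -> IRadj e a c1 -> IRadj e c1 c2 -> IRadj e c2 X' -> IRadj e c2 b ->
  ~~ IRadj e X a -> ~~ IRadj e X c2 -> ~~ IRadj e X X' -> ~~ IRadj e X b ->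
  ~~ IRadj e a c2 -> ~~ IRadj e a X' -> ~~ IRadj e a b ->
  ~~ IRadj e c1 X' -> ~~ IRadj e c1 b -> ~~ IRadj e X' b ->
  X != a -> X != c1 -> X != c2 -> X != X' -> X != b ->
  a != c1 -> a != c2 -> a != X' -> a != b ->
  c1 != c2 -> c1 != X' -> c1 != b -> c2 != X' -> c2 != b -> X' != b ->
  has_induced_S22_antipodal e X X'.
Proof.
move=> *; exists a, c1, c2, b; split; last by repeat split.
rewrite /= !inE !negb_or.
repeat (apply/andP; split) => //.
Qed.

End Core.


Section Core2.
Variables (T : finType) (e : rel T).
Hypothesis e_sym : symmetric e.
Hypothesis e_irr : irreflexive e.
Ltac atom := solve [ done | by rewrite eq_sym | by rewrite e_sym | by rewrite eqxx
  | by apply/orP; right | by apply/orP; right; rewrite e_sym | by apply: (good_notin (e:=e)) ].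
Ltac seteq := let z := fresh "z" in apply/setP => z; rewrite !inE;
  repeat match goal with |- context [z == ?x] => case: (z == x) end;
  repeat match goal with |- context [z \in ?x] => case: (z \in x) end; done.
Ltac mem := first [ by rewrite !inE eqxx !orbT | apply: notin3; atom ].
Ltac mkIR w1 w2 w3 := apply: IRset3; try atom; apply: (irr3 e_sym (wp:=w1) (wq:=w2) (wr:=w3)); atom.
Ltac adjv Y p q r s := apply: (adjG (Y:=Y) (p:=p) (q:=q) (r:=r) (s:=s)); [ done | done | seteq | seteq | atom | atom | atom | atom ].
Ltac nadj2 x z := apply: (nonadj2 e (x:=x) (z:=z)); [mem|mem|mem|mem|atom].
Ltac nadj1 Y p q r s := apply: (nonadj1G (Y:=Y) (p:=p) (q:=q) (r:=r) (s:=s)); [seteq|seteq|atom..].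
Ltac neq x := apply: (neqS (x:=x)); mem.


Lemma core (Y : {set T}) (a b c a' b' c' : T) :
  (forall y z, y \in Y -> z \in Y -> ~~ e y z) ->
  IR e = #|Y| + 3 ->
  good e Y a -> good e Y b -> good e Y c -> good e Y a' -> good e Y b' -> good e Y c' ->
  a != b -> a != c -> b != c ->
  a' != b' -> a' != c' -> b' != c' ->
  a != a' -> a != b' -> a != c' -> b != a' -> b != b' -> b != c' -> c != a' -> c != b' -> c != c' ->
  e a a' -> e b b' -> e c c' ->
  ~~ e a b' -> ~~ e a c' -> ~~ e b a' -> ~~ e b c' -> ~~ e c a' -> ~~ e c b' ->
  e a b || e b c ->
  IRset e (Y :|: [set a; b; c]) -> IRset e (Y :|: [set a'; b; c]) ->
  IRset e (Y :|: [set a'; b'; c]) -> IRset e (Y :|: [set a'; b'; c']) ->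
  has_induced_C4 e \/ has_induced_S22_antipodal e (Y :|: [set a; b; c]) (Y :|: [set a'; b'; c']).
Proof.
move=> indY HIR ga gb gc ga' gb' gc' ab ac bc a'b' a'c' b'c'.
move=> aa' ab' ac' ba' bb' bc' ca' cb' cc' Eaa' Ebb' Ecc' Nab' Nac' Nba' Nbc' Nca' Ncb' deg.
move=> I0 Ia Iab I'.
have C4_1 : IRset e (Y :|: [set a; b'; c]) -> has_induced_C4 e.
  move=> Ib; apply: (C4I (A:=Y :|: [set a; b; c]) (B:=Y :|: [set a'; b; c]) (C:=Y :|: [set a'; b'; c]) (D:=Y :|: [set a; b'; c])).
  - adjv Y a b c a'.
  - adjv Y b a' c b'.
  - adjv Y a' b' c a.
  - adjv Y b' a c b.
  - nadj2 a b.
  - nadj2 a' b.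
  - neq a.
  - neq a.
  - neq b.
  - neq b.
  - neq a'.
  - neq a'.
case: (boolP (e a c)) => Eac; last first.
  by left; apply: C4_1; mkIR a b' c.
case: (boolP (e a' c')) => Ea'c'; last first.
  have Iac : IRset e (Y :|: [set a'; b; c']) by mkIR a' b c'.
  left; apply: (C4I (A:=Y :|: [set a'; b; c]) (B:=Y :|: [set a'; b'; c]) (C:=Y :|: [set a'; b'; c']) (D:=Y :|: [set a'; b; c'])).
  - adjv Y b a' c b'.
  - adjv Y c a' b' c'.
  - adjv Y b' a' c' b.
  - adjv Y c' a' b c.
  - nadj2 b c.
  - nadj2 b' c.
  - neq b.
  - neq b.
  - neq c.
  - neq c.
  - neq b'.
  - neq b'.
have Iair : irredundant e (Y :|: [set a'; b; c]) by case/andP: Ia.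
have Iabir : irredundant e (Y :|: [set a'; b'; c]) by case/andP: Iab.
case: (boolP (e a' b')) => Ea'b'.
  case: (boolP (e b c)) => Ebc.
    have Ir1 : irredundant e (Y :|: [set b; a'; c]).
      by rewrite (_ : Y :|: [set b; a'; c] = Y :|: [set a'; b; c]) //; seteq.
    have Ir2 : irredundant e (Y :|: [set c; a'; b]).
      by rewrite (_ : Y :|: [set c; a'; b] = Y :|: [set a'; b; c]) //; seteq.
    have [u [Hu1 ua' Na'u /andP [uc Ncu] gu]] := pn3 Ir1 (good_notin gb) (ba') bc.
    have Ebu : e b u.
      case/orP: Hu1 => // /eqP Eub; by rewrite Eub e_sym Ebc in Ncu.
    have [w [Hw1 wa' Na'w /andP [wb Nbw] gw]] := pn3 Ir2 (good_notin gc) (ca') (negbT (introF eqP (fun E => (negP bc) (introT eqP (esym E))))).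
    have Ecw : e c w.
      case/orP: Hw1 => // /eqP Ewc; by rewrite Ewc Ebc in Nbw.
    have ub : u != b by apply/negP => /eqP E; rewrite E e_irr in Ebu.
    have wc : w != c by apply/negP => /eqP E; rewrite E e_irr in Ecw.
    have uw : u != w by apply/negP => /eqP E; rewrite -E Ebu in Nbw.
    have IB : IRset e (Y :|: [set a'; b; w]) by mkIR a' b w.
    have IC : IRset e (Y :|: [set a'; u; w]) by mkIR a' b c.
    have ID : IRset e (Y :|: [set a'; u; c]) by mkIR a' u c.
    left; apply: (C4I (A:=Y :|: [set a'; b; c]) (B:=Y :|: [set a'; b; w]) (C:=Y :|: [set a'; u; w]) (D:=Y :|: [set a'; u; c])).
    - adjv Y c a' b w.
    - adjv Y b a' w u.
    - adjv Y w a' u c.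
    - adjv Y u a' c b.
    - nadj2 b c.
    - nadj2 b w.
    - neq c.
    - neq b.
    - neq b.
    - neq b.
    - neq b.
    - neq w.
  have [u [Hu1 ub' Nb'u /andP [uc Ncu] gu]] := pn3 Iabir (good_notin ga') a'b' (negbT (introF eqP (fun E => (negP ca') (introT eqP (esym E))))).
  have Ea'u : e a' u.
    case/orP: Hu1 => // /eqP Eua'; by rewrite Eua' e_sym Ea'b' in Nb'u.
  have ua' : u != a' by apply/negP => /eqP E; rewrite E e_irr in Ea'u.
  have ub : u != b by apply/negP => /eqP E; rewrite E e_sym in Ea'u; rewrite Ea'u in Nba'.
  have IC : IRset e (Y :|: [set u; b'; c]) by mkIR u b' c.
  have ID : IRset e (Y :|: [set u; b; c]) by mkIR a' b' c.
  left; apply: (C4I (A:=Y :|: [set a'; b; c]) (B:=Y :|: [set a'; b'; c]) (C:=Y :|: [set u; b'; c]) (D:=Y :|: [set u; b; c])).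
  - adjv Y b a' c b'.
  - adjv Y a' b' c u.
  - adjv Y b' u c b.
  - adjv Y u b c a'.
  - nadj2 a' b.
  - nadj2 a' b'.
  - neq b.
  - neq a'.
  - neq a'.
  - neq a'.
  - neq a'.
  - neq b'.
case: (boolP (e b' c')) => Eb'c'; last first.
  by left; apply: C4_1; mkIR a' b' c'.
case: (boolP (e b c)) => Ebc.
  have Ir2 : irredundant e (Y :|: [set c; a'; b]).
    by rewrite (_ : Y :|: [set c; a'; b] = Y :|: [set a'; b; c]) //; seteq.
  have [w [Hw1 wa' Na'w /andP [wb Nbw] gw]] := pn3 Ir2 (good_notin gc) (ca') (negbT (introF eqP (fun E => (negP bc) (introT eqP (esym E))))).
  have Ecw : e c w.
    case/orP: Hw1 => // /eqP Ewc; by rewrite Ewc Ebc in Nbw.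
  have wc : w != c by apply/negP => /eqP E; rewrite E e_irr in Ecw.
  have wb' : w != b' by apply/negP => /eqP E; rewrite E Ebb' in Nbw.
  have IC : IRset e (Y :|: [set a'; b'; w]) by mkIR a' b c.
  have ID : IRset e (Y :|: [set a'; b; w]) by mkIR a' b w.
  left; apply: (C4I (A:=Y :|: [set a'; b; c]) (B:=Y :|: [set a'; b'; c]) (C:=Y :|: [set a'; b'; w]) (D:=Y :|: [set a'; b; w])).
  - adjv Y b a' c b'.
  - adjv Y c a' b' w.
  - adjv Y b' a' w b.
  - adjv Y w a' b c.
  - nadj2 b c.
  - nadj2 b' c.
  - neq b.
  - neq b.
  - neq c.
  - neq c.
  - neq b'.
  - neq b'.
have Eab : e a b by move: deg; rewrite (negbTE Ebc) orbF.
have IL1 : IRset e (Y :|: [set a; a'; b]) by mkIR c c' b'.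
have IL2 : IRset e (Y :|: [set b'; c; c']) by mkIR b a a'.
right; apply: (S22I (a:=Y :|: [set a; a'; b]) (c1:=Y :|: [set a'; b; c]) (c2:=Y :|: [set a'; b'; c]) (b:=Y :|: [set b'; c; c'])).
- adjv Y a b c a'.
- adjv Y a a' b c.
- adjv Y b a' c b'.
- adjv Y c a' b' c'.
- adjv Y a' b' c c'.
- nadj1 Y c a b a'.
- nadj2 a b.
- nadj2 a b.
- nadj2 a b.
- nadj2 a b.
- nadj2 a b.
- nadj2 a b.
- nadj2 b c.
- nadj2 a' b.
- nadj1 Y a' b' c' c.
- neq c.
- neq a.
- neq a.
- neq a.
- neq a.
- neq a.
- neq a.
- neq a.
- neq a.
- neq b.
- neq b.
- neq a'.
- neq c.
- neq a'.
- neq a'.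
Qed.


End Core2.


Section Wrap.
Variables (T : finType) (e : rel T).
Hypothesis e_sym : symmetric e.
Hypothesis e_irr : irreflexive e.

Definition prime_ok (X Y : {set T}) a a' :=
  [/\ e a a', good e Y a', a' \notin X &
     forall z, z \in X -> z != a -> (a' != z) && ~~ e z a'].

Lemma swapY (Y : {set T}) p q r s : p \notin Y -> p != q -> p != r ->
  (Y :|: [set p; q; r]) :\ p :|: [set s] = Y :|: [set s; q; r].
Proof.
move=> pY pq pr; apply/setP=> z; rewrite !inE.
case: (eqVneq z p) => [->|zp] /=.
  by rewrite (negbTE pY) (negbTE pq) (negbTE pr) !orbF.
by case: (z \in Y); case: (z == s); case: (z == q); case: (z == r).
Qed.

Ltac seteqW := let z := fresh "z" in apply/setP => z; rewrite !inE;
  repeat match goal with |- context [z == ?x] => case: (z == x) end;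
  repeat match goal with |- context [z \in ?x] => case: (z \in x) end; done.

Lemma core_wrap (X Y D1 D2 X' : {set T}) (a b c a' b' c' : T) :
  (forall y z, y \in Y -> z \in X -> ~~ e y z) ->
  X = Y :|: [set a; b; c] ->
  a \notin Y -> b \notin Y -> c \notin Y -> uniq [:: a; b; c] ->
  prime_ok X Y a a' -> prime_ok X Y b b' -> prime_ok X Y c c' ->
  posdeg_in e X b ->
  D1 = X :\ a :|: [set a'] -> D2 = D1 :\ b :|: [set b'] -> X' = D2 :\ c :|: [set c'] ->
  IRset e X -> IRset e D1 -> IRset e D2 -> IRset e X' ->
  has_induced_C4 e \/ has_induced_S22_antipodal e X X'.
Proof.
move=> HY HX aY bY cY Hu.
have /andP [/andP [ab ac] bc] : ((a != b) && (a != c)) && (b != c).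
  by move: Hu; rewrite /= !inE !negb_or !andbT.
case=> Eaa' ga' a'X Pa; case=> Ebb' gb' b'X Pb; case=> Ecc' gc' c'X Pc.
move=> Hdeg ED1 ED2 EX' IX ID1 ID2 IX'.
have aX : a \in X by rewrite HX !inE eqxx !orbT.
have bX : b \in X by rewrite HX !inE eqxx !orbT.
have cX : c \in X by rewrite HX !inE eqxx !orbT.
have E1 : D1 = Y :|: [set a'; b; c] by rewrite ED1 HX swapY.
have E2 : D2 = Y :|: [set a'; b'; c].
  rewrite ED2 E1 (_ : Y :|: [set a'; b; c] = Y :|: [set b; a'; c]); last by seteqW.
  have ba' : b != a' by apply/negP => /eqP E; by rewrite E (negbTE a'X) in bX.
  rewrite swapY //; seteqW.
have E3 : X' = Y :|: [set a'; b'; c'].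
  rewrite EX' E2 (_ : Y :|: [set a'; b'; c] = Y :|: [set c; a'; b']); last by seteqW.
  have ca' : c != a' by apply/negP => /eqP E; by rewrite E (negbTE a'X) in cX.
  have cb' : c != b' by apply/negP => /eqP E; by rewrite E (negbTE b'X) in cX.
  rewrite swapY //; seteqW.
have gx x : x \in X -> x \notin Y -> good e Y x.
  move=> xX xY; apply/negP => /in_cnbhdS [y yY]; rewrite in_cnbhd => /orP [/eqP E|E].
    by rewrite E yY in xY.
  by move: (HY y x yY xX); rewrite E.
have yX y : y \in Y -> y \in X by move=> yY; rewrite HX !inE yY.
have [a'b Nba'] := andP (Pa b bX (negbT (introF eqP (fun E => (negP ab) (introT eqP (esym E)))))).
have [a'c Nca'] := andP (Pa c cX (negbT (introF eqP (fun E => (negP ac) (introT eqP (esym E)))))).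
have [b'a Nab'] := andP (Pb a aX ab).
have [b'c Ncb'] := andP (Pb c cX (negbT (introF eqP (fun E => (negP bc) (introT eqP (esym E)))))).
have [c'a Nac'] := andP (Pc a aX ac).
have [c'b Nbc'] := andP (Pc b bX bc).
have neqX x y : x \in X -> y \notin X -> x != y.
  by move=> xX yX'; apply/negP => /eqP E; rewrite -E xX in yX'.
have a'b' : a' != b' by apply/negP => /eqP E; rewrite E Ebb' in Nba'.
have a'c' : a' != c' by apply/negP => /eqP E; rewrite E Ecc' in Nca'.
have b'c' : b' != c' by apply/negP => /eqP E; rewrite E Ecc' in Ncb'.
have deg : e a b || e b c.
  case/existsP: Hdeg => z /andP [zX Ebz].
  move: zX; rewrite {1}HX !inE => /orP [zY|/orP [/orP [] | ] /eqP Ez].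
  - by move: (HY z b zY bX); rewrite e_sym Ebz.
  - by rewrite -Ez e_sym Ebz.
  - by rewrite Ez e_irr in Ebz.
  - by rewrite -Ez Ebz orbT.
rewrite HX E3; rewrite E1 in ID1; rewrite E2 in ID2; rewrite E3 in IX'; rewrite HX in IX.
apply: (core e_sym e_irr) => //.
- by move=> y z yY zY; apply: HY => //; apply: yX.
- by case/andP: IX => _ /eqP <-; rewrite card3.
- by apply: gx.
- by apply: gx.
- by apply: gx.
- by rewrite neqX.
- by rewrite eq_sym.
- by rewrite eq_sym.
- by rewrite neqX.
- by rewrite neqX.
- by rewrite eq_sym.
- by rewrite neqX.
- by rewrite neqX.
- by rewrite neqX.
Qed.

End Wrap.


Section Main.
Variables (T : finType) (e : rel T).
Hypothesis e_sym : symmetric e.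
Hypothesis e_irr : irreflexive e.

Lemma stepE (D D' : {set T}) : IRadj e D D' ->
  exists u v, [/\ u \in D, e u v, D' = D :\ u :|: [set v], IRset e D & IRset e D'].
Proof.
case/and3P => ID ID' /existsP [u /andP [uD /existsP [v /andP [_ /andP [Euv /eqP E]]]]].
by exists u, v; split.
Qed.

Lemma mem_step (D : {set T}) u v z : z \in D :\ u :|: [set v] -> (z == v) || (z \in D).
Proof. by rewrite !inE => /orP [/andP [_ ->]|->]; rewrite ?orbT. Qed.

Lemma mem_step2 (D : {set T}) u v z : z \in D -> (z == u) || (z \in D :\ u :|: [set v]).
Proof. by move=> zD; rewrite !inE zD; case: (z == u). Qed.

Lemma prime_of (X Y : {set T}) x x' : x' \in EPN e x X -> x \in X ->
  (forall y, y \in Y -> (y \in X) && (y != x)) -> prime_ok e X Y x x'.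
Proof.
rewrite /EPN /PN !in_setD => /andP [x'X /andP [nx' x'x]] xX HY.
have x'nx : x' != x by apply/negP => /eqP E; rewrite E xX in x'X.
split => //.
- by move: x'x; rewrite in_cnbhd (negbTE x'nx).
- apply/negP => /in_cnbhdS [y yY x'y]; move/negP: nx'; apply; apply/in_cnbhdS.
  by exists y => //; case/andP: (HY y yY) => yX yx; rewrite in_setD1 yx.
- move=> z zX zx; have : x' \notin cnbhd e z.
    apply/negP => x'z; move/negP: nx'; apply; apply/in_cnbhdS.
    by exists z => //; rewrite in_setD1 zx.
  by rewrite in_cnbhd negb_or.
Qed.

End Main.


Ltac seteqM := let z := fresh "z" in apply/setP => z; rewrite !inE;
  repeat match goal with |- context [z == ?x] => case: (z == x) end;
  repeat match goal with |- context [z \in ?x] => case: (z \in x) end; done.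

Theorem lemma5p1 (T : finType) (e : rel T)
  (e_sym : symmetric e) (e_irr : irreflexive e)
  (X : {set T}) (x1 x2 x3 x1' x2' x3' : T) :
  IRconnected e ->
  IRset e X ->
  uniq [:: x1; x2; x3] ->
  x1 \in X -> x2 \in X -> x3 \in X ->
  (forall x, x \in X -> posdeg_in e X x = (x \in [set x1; x2; x3])) ->
  x1' \in EPN e x1 X -> x2' \in EPN e x2 X -> x3' \in EPN e x3 X ->
  IRdist e X ((X :\: [set x1; x2; x3]) :|: [set x1'; x2'; x3']) 3 ->
  has_induced_C4 e \/
  has_induced_S22_antipodal e X ((X :\: [set x1; x2; x3]) :|: [set x1'; x2'; x3']).
Proof.
move=> _ IX Hu x1X x2X x3X Hpos P1 P2 P3 [[_ [p [sp [pth lp]]]] _].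
have /andP [/andP [n12 n13] n23] : ((x1 != x2) && (x1 != x3)) && (x2 != x3).
  by move: Hu; rewrite /= !inE !negb_or !andbT.
set Y := X :\: [set x1; x2; x3].
set X' := Y :|: [set x1'; x2'; x3'].
have HY : forall y z, y \in Y -> z \in X -> ~~ e y z.
  move=> y z; rewrite !inE => /andP [yx yX] zX.
  have := Hpos y yX; rewrite !inE (negbTE yx) => /negbT H.
  by apply/negP => Eyz; move/negP: H; apply; apply/existsP; exists z; rewrite zX Eyz.
have HYX y : y \in Y -> (y \in X) && [&& y != x1, y != x2 & y != x3].
  by rewrite !inE !negb_or => /andP [/andP [/andP [-> ->] ->] ->].
have x1Y : x1 \notin Y by rewrite !inE eqxx.
have x2Y : x2 \notin Y by rewrite !inE eqxx !orbT.
have x3Y : x3 \notin Y by rewrite !inE eqxx !orbT.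
have Q1 : prime_ok e X Y x1 x1'.
  apply: prime_of => // y /HYX /andP [-> /and3P [-> _ _]] //.
have Q2 : prime_ok e X Y x2 x2'.
  apply: prime_of => // y /HYX /andP [-> /and3P [_ -> _]] //.
have Q3 : prime_ok e X Y x3 x3'.
  apply: prime_of => // y /HYX /andP [-> /and3P [_ _ ->]] //.
have HXY : X = Y :|: [set x1; x2; x3].
  apply/setP => z; rewrite !inE.
  case: (eqVneq z x1) => [->|]; first by rewrite x1X !orbT.
  case: (eqVneq z x2) => [->|]; first by rewrite x2X !orbT.
  case: (eqVneq z x3) => [->|]; first by rewrite x3X !orbT.
  by move=> ? ? ?; rewrite /= !orbF.
have [E11 g1 x1'X M1] := Q1; have [E22 g2 x2'X M2] := Q2; have [E33 g3 x3'X M3] := Q3.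
have [n21' N21] := andP (M1 x2 x2X (negbT (introF eqP (fun E => (negP n12) (introT eqP (esym E)))))).
have [n31' N31] := andP (M1 x3 x3X (negbT (introF eqP (fun E => (negP n13) (introT eqP (esym E)))))).
have [n12' N12] := andP (M2 x1 x1X n12).
have [n32' N32] := andP (M2 x3 x3X (negbT (introF eqP (fun E => (negP n23) (introT eqP (esym E)))))).
have [n13' N13] := andP (M3 x1 x1X n13).
have [n23' N23] := andP (M3 x2 x2X n23).
have Up : uniq [:: x1'; x2'; x3'].
  rewrite /= !inE !negb_or !andbT; apply/andP; split; first (apply/andP; split).
  - by apply/negP => /eqP E; rewrite -E E11 in N12.
  - by apply/negP => /eqP E; rewrite -E E11 in N13.
  - by apply/negP => /eqP E; rewrite -E E22 in N23.
have primes z : z \in [:: x1'; x2'; x3'] -> (z \in X') && (z \notin X).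
  by rewrite !inE => /or3P [] /eqP ->; rewrite eqxx ?orbT /= ?x1'X ?x2'X ?x3'X.
have neqX x y : x \in X -> y \notin X -> x != y.
  by move=> xX yX'; apply/negP => /eqP E; rewrite -E xX in yX'.
have olds z : z \in [:: x1; x2; x3] -> (z \in X) && (z \notin X').
  rewrite !inE => /or3P [] /eqP ->;
  by rewrite ?eqxx ?orbT ?x1X ?x2X ?x3X /= !negb_or !neqX.
case: p sp pth lp => [|D1 [|D2 [|D3 [|D4 p]]]] //= sp.
- move=> _ EX; have := primes x1'; rewrite inE eqxx => /(_ isT).
  by rewrite /X' -EX => /andP [->].
- move=> /andP [A1 _] lp.
  have [u1 [v1 [_ _ E1 _ _]]] := stepE A1.
  have sub : {subset [:: x1'; x2'; x3'] <= [:: v1]}.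
    move=> z /primes /andP []; rewrite /X' -lp E1 => /mem_step /orP [/eqP ->|->] //.
    by rewrite inE eqxx.
  by have := uniq_leq_size Up sub.
- move=> /and3P [A1 A2 _] lp.
  have [u1 [v1 [_ _ E1 _ _]]] := stepE A1.
  have [u2 [v2 [_ _ E2 _ _]]] := stepE A2.
  have sub : {subset [:: x1'; x2'; x3'] <= [:: v1; v2]}.
    move=> z /primes /andP []; rewrite /X' -lp E2 => /mem_step /orP [/eqP ->|].
      by rewrite !inE eqxx orbT.
    rewrite E1 => /mem_step /orP [/eqP ->|->] //.
    by rewrite inE eqxx.
  by have := uniq_leq_size Up sub.
move=> /and4P [A1 A2 A3 _] lp.
have [u1 [v1 [_ Ev1 E1 _ ID1]]] := stepE A1.
have [u2 [v2 [_ Ev2 E2 _ ID2]]] := stepE A2.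
have [u3 [v3 [_ Ev3 E3 _ ID3]]] := stepE A3.
have sub : {subset [:: x1'; x2'; x3'] <= [:: v1; v2; v3]}.
  move=> z /primes /andP []; rewrite /X' -lp E3 => /mem_step /orP [/eqP ->|].
    by rewrite !inE eqxx !orbT.
  rewrite E2 => /mem_step /orP [/eqP ->|].
    by rewrite !inE eqxx !orbT.
  rewrite E1 => /mem_step /orP [/eqP ->|->] //.
  by rewrite inE eqxx.
have sub2 : {subset [:: x1; x2; x3] <= [:: u1; u2; u3]}.
  move=> z /olds /andP [zX zX'].
  have := mem_step2 u1 v1 zX; rewrite -E1 => /orP [/eqP ->|zD1].
    by rewrite inE eqxx.
  have := mem_step2 u2 v2 zD1; rewrite -E2 => /orP [/eqP ->|zD2].
    by rewrite !inE eqxx !orbT.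
  have := mem_step2 u3 v3 zD2; rewrite -E3 lp => /orP [/eqP ->|zX''].
    by rewrite !inE eqxx !orbT.
  by move: zX'; rewrite /X' zX''.
have [_ Iv] := uniq_min_size Up sub (leqnn 3).
have [_ Iu] := uniq_min_size Hu sub2 (leqnn 3).
have Uu : uniq [:: u1; u2; u3] := leq_size_uniq Hu sub2 (leqnn 3).
have U1 : u1 \in [:: x1; x2; x3] by rewrite Iu !inE eqxx.
have U2 : u2 \in [:: x1; x2; x3] by rewrite Iu !inE eqxx !orbT.
have U3 : u3 \in [:: x1; x2; x3] by rewrite Iu !inE eqxx !orbT.
have V1 : v1 \in [:: x1'; x2'; x3'] by rewrite Iv !inE eqxx.
have V2 : v2 \in [:: x1'; x2'; x3'] by rewrite Iv !inE eqxx !orbT.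
have V3 : v3 \in [:: x1'; x2'; x3'] by rewrite Iv !inE eqxx !orbT.
have EX' : X' = D2 :\ u3 :|: [set v3] by rewrite /X' -lp E3.
have IX' : IRset e X' by rewrite /X' -lp.
clear sub sub2 Iv Iu A1 A2 A3 lp E3 ID3.
move: U1 U2 U3 V1 V2 V3; rewrite !inE => U1 U2 U3 V1 V2 V3.
case/or3P: U1 => /eqP ?; subst u1;
case/or3P: V1 => /eqP ?; subst v1;
try (match goal with H : is_true (?f ?x ?y), H' : is_true (~~ ?f ?x ?y) |- _ => by rewrite H in H' end);
case/or3P: U2 => /eqP ?; subst u2;
try (by move: Uu; rewrite /= !inE !eqxx ?orbT /= ?andbF);
case/or3P: V2 => /eqP ?; subst v2;
try (match goal with H : is_true (?f ?x ?y), H' : is_true (~~ ?f ?x ?y) |- _ => by rewrite H in H' end);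
case/or3P: U3 => /eqP ?; subst u3;
try (by move: Uu; rewrite /= !inE !eqxx ?orbT /= ?andbF);
case/or3P: V3 => /eqP ?; subst v3;
try (match goal with H : is_true (?f ?x ?y), H' : is_true (~~ ?f ?x ?y) |- _ => by rewrite H in H' end).
all: apply: (core_wrap e_sym e_irr HY _ _ _ _ _ _ _ _ _ E1 E2 EX' IX ID1 ID2 IX').
all: try done.
all: try (apply: (etrans HXY); seteqM).
all: by rewrite Hpos // !inE eqxx ?orbT.
Qed.
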